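(* Consider the ODE system $$\frac{du}{dt}=\frac{a_1u}{1+fv}-b_1u^2-c_1uv,\qquad \frac{dv}{dt}=a_2v-b_2v^2-c_2uv,$$ with positive parameters $a_1,a_2,b_1,b_2,c_1,c_2$ and $f\ge0$. The boundary equilibrium $E_3=(0,\frac{a_2}{b_2})$ is locally stable (both eigenvalues of the Jacobian at $E_3$ are negative) if and only if $$f>\frac{a_1b_2^2-a_2b_2c_1}{a_2^2c_1}.$$ *)

(* Defs.v *)
From HB Require Import structures.
From mathcomp Require Import all_boot all_order all_algebra.
From mathcomp Require Import all_classical all_reals all_analysis.
Set Implicit Arguments. Unset Strict Implicit. Unset Printing Implicit Defensive.
Import Order.TTheory GRing.Theory Num.Theory.
Local Open Scope ring_scope.

Definition rhs_u {R : realType} (a1 b1 c1 f : R) (u v : R) : R :=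
  a1 * u / (1 + f * v) - b1 * u ^+ 2 - c1 * u * v.
Definition rhs_v {R : realType} (a2 b2 c2 : R) (u v : R) : R :=
  a2 * v - b2 * v ^+ 2 - c2 * u * v.

Definition pd_u {R : realType} (F : R -> R -> R) (u v : R) : R :=
  derive1 (fun x => F x v) u.
Definition pd_v {R : realType} (F : R -> R -> R) (u v : R) : R :=
  derive1 (fun y => F u y) v.

Definition jacobian2 {R : realType} (F G : R -> R -> R) (u v : R) : 'M[R]_2 :=
  \matrix_(i < 2, j < 2)
    if (i == 0 :> nat) then (if (j == 0 :> nat) then pd_u F u v else pd_v F u v)
    else (if (j == 0 :> nat) then pd_u G u v else pd_v G u v).

Definition both_eigenvalues_negative {R : realType} (J : 'M[R]_2) : Prop :=
  exists l1 l2 : R, l1 < 0 /\ l2 < 0 /\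
    char_poly J = ('X - l1%:P) * ('X - l2%:P).

(* Main.v *)
Require Import Defs.
From HB Require Import structures.
From mathcomp Require Import all_boot all_order all_algebra.
From mathcomp Require Import all_classical all_reals all_analysis.
From mathcomp Require Import ring lra.
Import Order.TTheory GRing.Theory Num.Theory.
Local Open Scope ring_scope.

Lemma pd1 (R : realType) (a1 b1 c1 f v0: R) : pd_u (rhs_u a1 b1 c1 f) 0 v0 = a1 / (1 + f * v0) - c1 * v0.
Proof.
rewrite /pd_u /rhs_u derive1E derive_val.
rewrite /GRing.scale /= !(mulr0, mul0r, add0r, addr0, sub0r, subr0, mulr1).
ring.
Qed.
Lemma pd2 (R : realType) (a1 b1 c1 f v0: R) : pd_v (rhs_u a1 b1 c1 f) 0 v0 = 0.
Proof.
rewrite /pd_v /rhs_u derive1E.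
have -> : (fun y : R => a1 * 0 / (1 + f * y) - b1 * 0 ^+ 2 - c1 * 0 * y) = cst 0.
  by apply/funext => y; rewrite !(mulr0, mul0r, expr0n, subr0).
by rewrite derive_val.
Qed.
Lemma pd4 (R : realType) (a2 b2 c2 v0: R) : pd_v (rhs_v a2 b2 c2) 0 v0 = a2 - 2 * b2 * v0.
Proof.
rewrite /pd_v /rhs_v derive1E derive_val.
rewrite /GRing.scale /= !(mulr0, mul0r, add0r, addr0, sub0r, subr0, mulr1).
ring.
Qed.

Theorem mainTheorem8 (R : realType) (a1 a2 b1 b2 c1 c2 f : R)
  (ha1 : 0 < a1) (ha2 : 0 < a2) (hb1 : 0 < b1) (hb2 : 0 < b2)
  (hc1 : 0 < c1) (hc2 : 0 < c2) (hf : 0 <= f) :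
  both_eigenvalues_negative
    (jacobian2 (rhs_u a1 b1 c1 f) (rhs_v a2 b2 c2) 0 (a2 / b2))
  <-> (a1 * b2 ^+ 2 - a2 * b2 * c1) / (a2 ^+ 2 * c1) < f.
Proof.
set v0 := a2 / b2.
set A := a1 / (1 + f * v0) - c1 * v0.
set J := jacobian2 _ _ _ _.
have hv0 : 0 < v0 by rewrite divr_gt0.
have hd : 0 < 1 + f * v0 by apply: ltr_wpDr => //; rewrite mulr_ge0 // ltW.
have hJ : char_poly J = ('X - A%:P) * ('X - (- a2)%:P).
  rewrite char_poly_trig.
    rewrite !big_ord_recl big_ord0 mulr1 /J /jacobian2 !mxE /= pd1 pd4.
    congr (_ * ('X - _%:P)); rewrite /v0; field; exact: lt0r_neq0.
  apply/is_trig_mxP => i j; rewrite /J /jacobian2 mxE.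
  case: i => [[|[|i]] Hi] //; case: j => [[|[|j]] Hj] //= _.
  exact: pd2.
have key : A < 0 <-> (a1 * b2 ^+ 2 - a2 * b2 * c1) / (a2 ^+ 2 * c1) < f.
  rewrite ltr_pdivrMr ?mulr_gt0 ?exprn_gt0 //.
  rewrite /A subr_lt0 ltr_pdivrMr // -(ltr_pM2r (exprn_gt0 2 hb2)).
  have -> : c1 * v0 * (1 + f * v0) * b2 ^+ 2 = c1 * a2 * b2 + f * (a2 ^+ 2 * c1).
    rewrite /v0; field; exact: lt0r_neq0.
  split => H; lra.
split.
- move=> [l1 [l2 [h1 [h2 he]]]]; apply/key.
  have : (char_poly J).[A] = 0 by rewrite hJ !hornerE subrr mul0r.
  rewrite he !hornerE => /eqP; rewrite mulf_eq0 !subr_eq0 => /orP[] /eqP ->; done.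
- move=> H; exists A, (- a2); split; first by apply/key.
  by split; [rewrite oppr_lt0 | ].
Qed.
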